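(* Let $G$ be a totally disconnected locally compact group, $K\leq G$ a compact open subgroup and $\mathcal{G}=K\backslash G/K$ the quotient hypergroup. If $X$ is any $G$-boundary such that $K\backslash X$ is totally disconnected, then $K\backslash X$ (with $\mathrm{C}(K\backslash X)=\mathrm{C}(X)^K$ carrying its natural $\mathcal{G}$-action) is a $\mathcal{G}$-boundary.
   Context: A $G$-boundary is a compact $G$-space that is minimal (all orbits dense) and strongly proximal (for every Borel probability measure $\mu$ on $X$, the weak* closure of $G\mu$ contains a point mass). The quotient hypergroup $\mathcal{G}=K\backslash G/K$ has unit $K$, involution $\overline{KgK}=Kg^{-1}K$ and product $(KgK)*(KhK)=\frac{1}{[K:K\cap hKh^{-1}]}\sum_{l\in K/(K\cap hKh^{-1})}\delta_{KglhK}$ on (point masses of) elements. The $\mathcal{G}$-action on $\mathrm{C}(X)^K$ is $(KgK)f=\int_K k g f\,dk$ with $dk$ normalized Haar measure. A $\mathcal{G}$-action on a compact space $Y$ is a family of unital completely positive maps $\alpha_g$ on $\mathrm{C}(Y)$, $g \in \mathcal{G}$, with $\alpha_e=\mathrm{id}$ and $\alpha_g\alpha_h=\int\alpha_k\,d(\delta_g*\delta_h)(k)$; $\mathcal{G}$ then acts on the probability measures $\mathcal{P}(Y)$ by the dual maps. Such a $\mathcal{G}$-space $Y$ is minimal if $\overline{\mathrm{conv}}(\mathcal{G}\delta_y)=\mathcal{P}(Y)$ for every $y\in Y$, strongly proximal if for every $\mu\in\mathcal{P}(Y)$ the closure $\overline{\mathcal{G}\mu}$ contains a point mass, and a $\mathcal{G}$-boundary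 if it is minimal and strongly proximal. *)

(* Defs.v *)
From HB Require Import structures.
From mathcomp Require Import all_boot all_order all_algebra.
From mathcomp Require Import all_classical all_reals all_analysis.
Set Implicit Arguments. Unset Strict Implicit. Unset Printing Implicit Defensive.
Import Order.TTheory GRing.Theory Num.Theory.
Import numFieldNormedType.Exports.
Local Open Scope classical_set_scope.
Local Open Scope ring_scope.

Record topgroup (G : topologicalType) (mul : G -> G -> G) (inv : G -> G)
    (one : G) : Prop := TopGroup {
  tg_mulA : forall a b c, mul a (mul b c) = mul (mul a b) c;
  tg_mul1g : forall a, mul one a = a;
  tg_mulg1 : forall a, mul a one = a;
  tg_mulVg : forall a, mul (inv a) a = one;
  tg_mulgV : forall a, mul a (inv a) = one;
  tg_mul_cont : continuous (fun p : G * G => mul p.1 p.2);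
  tg_inv_cont : continuous inv;
  tg_hausdorff : hausdorff_space G }.

Definition tdlc_group (G : topologicalType) mul inv (one : G) : Prop :=
  [/\ topgroup mul inv one, locally_compact [set: G]
    & totally_disconnected [set: G]].

Definition compact_open_subgroup (G : topologicalType) (mul : G -> G -> G)
    (inv : G -> G) (one : G) (K : set G) : Prop :=
  [/\ K one, (forall a b, K a -> K b -> K (mul a b)),
      (forall a, K a -> K (inv a)), compact K & open K].

Definition continuous_action (G X : topologicalType) (mul : G -> G -> G)
    (one : G) (act : G -> X -> X) : Prop :=
  [/\ continuous (fun p : G * X => act p.1 p.2),
      (forall x, act one x = x) &
      (forall g h x, act (mul g h) x = act g (act h x))].

Definition compact_hausdorff (X : topologicalType) : Prop :=
  compact [set: X] /\ hausdorff_space X.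

Section States.
Variables (R : realType) (T : topologicalType).

(* a (Radon) probability measure on the compact space T, seen (Riesz) as a
   positive unital linear functional on C(T) = real continuous functions *)
Definition is_state (phi : (T -> R) -> R) : Prop :=
  [/\ (forall f g : T -> R, continuous f -> continuous g -> phi (f \+ g) = phi f + phi g),
      (forall (c : R) (f : T -> R), continuous f -> phi (fun x => c * f x) = c * phi f),
      (forall f : T -> R, continuous f -> (forall x, 0 <= f x) -> 0 <= phi f)
    & phi (fun _ => 1) = 1].

Definition dirac_state (x : T) : (T -> R) -> R := fun f => f x.

Definition wstar_closure (S : set ((T -> R) -> R)) : set ((T -> R) -> R) :=
  fun phi => forall (n : nat) (fs : 'I_n -> T -> R) (eps : R),
    (forall i, continuous (fs i)) -> 0 < eps ->
    exists2 psi, S psi & forall i, `|phi (fs i) - psi (fs i)| < eps.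

Definition state_conv (S : set ((T -> R) -> R)) : set ((T -> R) -> R) :=
  fun phi => exists (n : nat) (w : 'I_n -> R) (psi : 'I_n -> (T -> R) -> R),
    [/\ (forall i, 0 <= w i), \sum_(i < n) w i = 1, (forall i, S (psi i))
      & forall f, continuous f -> phi f = \sum_(i < n) w i * psi i f].

End States.

Definition G_orbit_state (R : realType) (G X : topologicalType)
    (act : G -> X -> X) (mu : (X -> R) -> R) : set ((X -> R) -> R) :=
  [set nu | exists g : G, nu = (fun f => mu (fun x => f (act g x)))].

Definition G_boundary (R : realType) (G X : topologicalType)
    (mul : G -> G -> G) (one : G) (act : G -> X -> X) : Prop :=
  [/\ compact_hausdorff X, continuous_action mul one act,
      (forall x : X, closure (range (fun g => act g x)) = [set: X])
    &
      (forall mu : (X -> R) -> R, is_state mu ->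
         exists x : X, wstar_closure (G_orbit_state act mu) (@dirac_state R X x))].

(* the normalized Haar measure dk of K, as a functional f |-> \int_K f dk
   (only the values of f on K matter) *)
Definition normalized_haar (R : realType) (G : topologicalType)
    (mul : G -> G -> G) (K : set G) (haar : (G -> R) -> R) : Prop :=
  (forall f g : G -> R, {in K, f =1 g} -> haar f = haar g) /\
  [/\ (forall f g : G -> R, {within K, continuous f} -> {within K, continuous g} ->
         haar (f \+ g) = haar f + haar g),
      (forall (c : R) (f : G -> R), {within K, continuous f} ->
         haar (fun k => c * f k) = c * haar f),
      (forall f : G -> R, {within K, continuous f} -> (forall k, K k -> 0 <= f k) ->
         0 <= haar f),
      haar (fun _ => 1) = 1
    & forall (f : G -> R) k0, K k0 -> {within K, continuous f} ->
         haar (fun k => f (mul k0 k)) = haar f].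

(* Y is the orbit space K\X, realised through the quotient map q.
   (KgK) F evaluated at y = Kx is \int_K F(q(g^-1 k^-1 x)) dk, i.e. the
   formula (KgK)f = \int_K k g f dk with (g f)(x) = f(g^-1 x), transported
   to C(Y) = C(X)^K. *)
Definition hyp_act (R : realType) (G X Y : topologicalType) (inv : G -> G)
    (act : G -> X -> X) (q : X -> Y) (haar : (G -> R) -> R) (g : G)
    (F : Y -> R) : Y -> R :=
  fun y => xget 0 [set r : R | exists x, q x = y /\
               r = haar (fun k => F (q (act (inv g) (act (inv k) x))))].

Definition hyp_orbit_state (R : realType) (G X Y : topologicalType)
    (inv : G -> G) (act : G -> X -> X) (q : X -> Y) (haar : (G -> R) -> R)
    (mu : (Y -> R) -> R) : set ((Y -> R) -> R) :=
  [set nu | exists g : G, nu = (fun F => mu (hyp_act inv act q haar g F))].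

Definition hyp_boundary (R : realType) (G X Y : topologicalType)
    (inv : G -> G) (act : G -> X -> X) (q : X -> Y) (haar : (G -> R) -> R)
    : Prop :=
  (forall (y : Y) (mu : (Y -> R) -> R), is_state mu ->
     wstar_closure (state_conv
        (hyp_orbit_state inv act q haar (@dirac_state R Y y))) mu) /\
  (forall mu : (Y -> R) -> R, is_state mu ->
     exists y : Y, wstar_closure (hyp_orbit_state inv act q haar mu)
                     (@dirac_state R Y y)).

(* Main.v *)
Require Import Defs.
From HB Require Import structures.
From mathcomp Require Import all_boot all_order all_algebra.
From mathcomp Require Import all_classical all_reals all_analysis.
Import Order.TTheory GRing.Theory Num.Theory.
Import numFieldNormedType.Exports.
Local Open Scope classical_set_scope.
Local Open Scope ring_scope.
Set Implicit Arguments. Unset Strict Implicit.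
Section ContFacts.
Variables (R : realType) (T : topologicalType).
Implicit Types f g : T -> R.

Lemma ct_add f g : continuous f -> continuous g -> continuous (fun x => f x + g x).
Proof. by move=> hf hg x; apply: (continuousD (hf x) (hg x)). Qed.
Lemma ct_opp f : continuous f -> continuous (fun x => - f x).
Proof. by move=> hf x; apply: (continuousN (hf x)). Qed.
Lemma ct_sub f g : continuous f -> continuous g -> continuous (fun x => f x - g x).
Proof. by move=> hf hg; apply: ct_add => //; apply: ct_opp. Qed.
Lemma ct_mul f g : continuous f -> continuous g -> continuous (fun x => f x * g x).
Proof. by move=> hf hg x; apply: (continuousM (hf x) (hg x)). Qed.
Lemma ct_cst (c : R) : continuous (fun _ : T => c).
Proof. exact: cst_continuous. Qed.
Lemma ct_scale (c : R) f : continuous f -> continuous (fun x => c * f x).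
Proof. by move=> hf; apply: ct_mul => //; apply: ct_cst. Qed.
Lemma ct_sum (I : Type) (s : seq I) (F : I -> T -> R) :
  (forall i, continuous (F i)) -> continuous (fun x => \sum_(i <- s) F i x).
Proof.
move=> hF; elim: s => [|a s IH].
  by under eq_fun do rewrite big_nil; apply: ct_cst.
by under eq_fun do rewrite big_cons; apply: ct_add.
Qed.
End ContFacts.

Section StateFacts.
Variables (R : realType) (T : topologicalType) (mu : (T -> R) -> R).
Hypothesis smu : is_state mu.
Implicit Types f g : T -> R.

Lemma st_add f g : continuous f -> continuous g -> mu (fun x => f x + g x) = mu f + mu g.
Proof. by case: smu => h _ _ _; apply: h. Qed.
Lemma st_scale (c : R) f : continuous f -> mu (fun x => c * f x) = c * mu f.
Proof. by case: smu => _ h _ _; apply: h. Qed.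
Lemma st_pos f : continuous f -> (forall x, 0 <= f x) -> 0 <= mu f.
Proof. by case: smu => _ _ h _; apply: h. Qed.
Lemma st_one : mu (fun _ => 1) = 1.
Proof. by case: smu. Qed.
Lemma st_cst (c : R) : mu (fun _ => c) = c.
Proof.
have -> : (fun _ : T => c) = (fun x => c * (fun _ => 1) x) by apply: funext => x; rewrite mulr1.
by rewrite st_scale ?st_one ?mulr1 //; apply: ct_cst.
Qed.
Lemma st_opp f : continuous f -> mu (fun x => - f x) = - mu f.
Proof.
move=> hf; have -> : (fun x => - f x) = (fun x => -1 * f x) by apply: funext => x; rewrite mulN1r.
by rewrite st_scale // mulN1r.
Qed.
Lemma st_sub f g : continuous f -> continuous g -> mu (fun x => f x - g x) = mu f - mu g.
Proof. by move=> hf hg; rewrite st_add ?st_opp //; apply: ct_opp. Qed.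
Lemma st_le f g : continuous f -> continuous g -> (forall x, f x <= g x) -> mu f <= mu g.
Proof.
move=> hf hg h; rewrite -subr_ge0 -st_sub //; apply: st_pos; first exact: ct_sub.
by move=> x; rewrite subr_ge0.
Qed.
Lemma st_abs_le (h b : T -> R) : continuous h -> continuous b -> (forall x, `|h x| <= b x) ->
  `|mu h| <= mu b.
Proof.
move=> hh hb hle; rewrite ler_norml; apply/andP; split.
  rewrite -st_opp //; apply: st_le => //; first exact: ct_opp.
  by move=> x; have := hle x; rewrite ler_norml => /andP[].
by apply: st_le => // x; have := hle x; rewrite ler_norml => /andP[].
Qed.
Lemma st_sum (I : Type) (s : seq I) (F : I -> T -> R) :
  (forall i, continuous (F i)) -> mu (fun x => \sum_(i <- s) F i x) = \sum_(i <- s) mu (F i).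
Proof.
move=> hF; elim: s => [|a s IH].
  by under eq_fun do rewrite big_nil; rewrite big_nil st_cst.
under eq_fun do rewrite big_cons; rewrite big_cons st_add ?IH //.
exact: ct_sum.
Qed.
End StateFacts.
Lemma quarter (R : realType) (e : R) : e / 4 + e / 4 = e / 2.
Proof.
have -> : e / 4 = e / 2 / 2 by rewrite -mulrA -invfM -natrM.
by rewrite -splitr.
Qed.
Unset Implicit Arguments. Set Strict Implicit.

Section ZeroDim.
Variables (R : realType) (Y : topologicalType).
Hypothesis cY : compact [set: Y].
Hypothesis hY : hausdorff_space Y.
Hypothesis td : totally_disconnected [set: Y].

Lemma td_key (x : Y) (A1 A2 : set Y) :
  let Q := fun z => forall C : set Y, clopen C -> C x -> C z in
  closed A1 -> closed A2 -> A1 `&` A2 = set0 -> Q `<=` A1 `|` A2 -> A1 x ->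
  A2 `&` Q = set0.
Proof.
move=> Q cA1 cA2 A12 QA A1x.
have [U [V [oU oV sA1 sA2 UV0]]] := (@normal_openP R Y).1 (compact_normal hY cY) A1 A2 cA1 cA2 A12.
pose W := ~` (U `|` V).
have cW : closed W by apply: open_closedC; apply: openU.
have [C [clC Cx CW]] : exists C : set Y, [/\ clopen C, C x & C `&` W = set0].
  apply: contrapT => hno.
  have ne : forall C : set Y, clopen C /\ C x -> C `&` W !=set0.
    move=> C [clC Cx]; apply/set0P/negP => /eqP e; apply: hno; by exists C.
  pose F := filter_from [set C : set Y | clopen C /\ C x] (fun C => C `&` W).
  have FF : Filter F.
    apply: filter_from_filter; first by exists setT; split => //; exact: clopenT.
    move=> C1 C2 [h1 h1'] [h2 h2']; exists (C1 `&` C2).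
      by split; [exact: clopenI|split].
    by move=> z [[a b] c]; split; split.
  have PF : ProperFilter F by apply: filter_from_proper => C /ne.
  have FW : F W by exists setT; [split => //; exact: clopenT | move=> z []].
  have cptW : compact W by apply: (subclosed_compact cW cY).
  have [p [Wp clp]] := cptW F PF FW.
  have Qp : Q p.
    move=> C [oC cC] Cx; apply: contrapT => nCp.
    have nb : nbhs p (~` C) by apply: open_nbhs_nbhs; split => //; exact: closed_openC.
    have FC : F (C `&` W) by exists C => //.
    by have [z [[Cz _] nCz]] := clp _ _ FC nb.
  by case: (QA p Qp) => [/sA1 Up|/sA2 Vp]; apply: Wp; [left|right].
have clCU : clopen (C `&` U).
  split; first by apply: openI => //; case: clC.
  have -> : C `&` U = C `&` ~` V.
    apply/seteqP; split => z [Cz h]; split => //.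
      by move=> Vz; have : (U `&` V) z by []; rewrite UV0.
    have : ~ W z by move=> Wz; have : (C `&` W) z by []; rewrite CW.
    by rewrite /W => /contrapT [//|/h].
  by apply: closedI; [case: clC | exact: open_closedC].
apply/seteqP; split => // z [A2z Qz].
have [_ Uz] := Qz _ clCU (conj Cx (sA1 _ A1x)).
have : (U `&` V) z by split => //; apply: sA2.
by rewrite UV0.
Qed.

Lemma td_zero_dim : zero_dimensional Y.
Proof.
move=> x y xy; apply: contrapT => nosep.
pose Q := fun z => forall C : set Y, clopen C -> C x -> C z.
have Qy : Q y.
  move=> C clC Cx; apply: contrapT => nCy; apply: nosep; by exists C.
have Qx : Q x by [].
have cQ : closed Q.
  have -> : Q = \bigcap_(C in [set C : set Y | clopen C /\ C x]) C.
    apply/seteqP; split => z h.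
      by move=> C [] /h; apply.
    by move=> C clC Cx; apply: h.
  by apply: closed_bigI => C [[]].
have conQ : connected Q.
  move=> B B0 [Oo oOo BOo] [Cc cCc BC].
  have c1 : closed (Q `&` Cc) by apply: closedI.
  have c2 : closed (Q `&` ~` Oo) by apply: closedI => //; exact: open_closedC.
  have d12 : (Q `&` Cc) `&` (Q `&` ~` Oo) = set0.
    apply/seteqP; split => // z [h1 [_ nO]].
    have : B z by rewrite BC.
    by rewrite BOo => -[].
  have cov : Q `<=` (Q `&` Cc) `|` (Q `&` ~` Oo).
    move=> z Qz; have [Ooz|nOoz] := pselect (Oo z); last by right.
    left; have : B z by rewrite BOo.
    by rewrite BC.
  have [B1x|nB1x] := pselect ((Q `&` Cc) x).
    have := @td_key x _ _ c1 c2 d12 cov B1x.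
    move=> e; apply/seteqP; split; first by rewrite BOo => z [].
    move=> z Qz; rewrite BOo; split => //; apply: contrapT => nOoz.
    by have : ((Q `&` ~` Oo) `&` Q) z by []; rewrite e.
  have B2x : (Q `&` ~` Oo) x by case: (cov x Qx).
  have cov' : Q `<=` (Q `&` ~` Oo) `|` (Q `&` Cc) by move=> z /cov [];[right|left].
  have d21 : (Q `&` ~` Oo) `&` (Q `&` Cc) = set0 by rewrite setIC.
  have := @td_key x _ _ c2 c1 d21 cov' B2x.
  move=> e; case: B0 => z Bz.
  have : ((Q `&` Cc) `&` Q) z by move: Bz; rewrite BC => -[].
  by rewrite e.
have : connected_component [set: Y] x y.
  by exists Q => //; split.
by rewrite td // => yx; move/eqP: xy; apply; rewrite yx.
Qed.

Lemma clopen_nbhs (z : Y) (U : set Y) : nbhs z U ->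
  exists D : set Y, [/\ clopen D, D z & D `<=` U].
Proof.
move=> nU; have := zero_dimensional_cvg hY td_zero_dim cY nU.
by case=> D [Dz clD] DU; exists D.
Qed.
End ZeroDim.

Definition chi (R : realType) (T : Type) (S : set T) (x : T) : R :=
  if `[< S x >] then 1 else 0.
Arguments chi R {T} S x.

Lemma chi_in (R : realType) (T : Type) (S : set T) x : S x -> chi R S x = 1.
Proof. by move=> Sx; rewrite /chi asboolT. Qed.
Arguments chi_in R {T S x}.
Lemma chi_out (R : realType) (T : Type) (S : set T) x : ~ S x -> chi R S x = 0.
Proof. by move=> Sx; rewrite /chi asboolF. Qed.
Arguments chi_out R {T S x}.
Lemma chi_ge0 (R : realType) (T : Type) (S : set T) x : 0 <= chi R S x.
Proof. by rewrite /chi; case: ifP. Qed.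
Arguments chi_ge0 R {T S x}.

Lemma chi_cont (R : realType) (T : topologicalType) (S : set T) :
  clopen S -> continuous (chi R S).
Proof.
move=> [oS cS] z; have [Sz|nSz] := pselect (S z).
  rewrite /continuous_at (chi_in R Sz); apply: cvg_near_cst.
  by apply: (filterS _ (open_nbhs_nbhs (conj oS Sz))) => x Sx; rewrite chi_in.
rewrite /continuous_at (chi_out R nSz); apply: cvg_near_cst.
have oC : open (~` S) by exact: closed_openC.
by apply: (filterS _ (open_nbhs_nbhs (conj oC nSz))) => x Sx; rewrite chi_out.
Qed.

Lemma fin_cover (Y : topologicalType) : compact [set: Y] ->
  forall D : Y -> set Y, (forall z, nbhs z (D z)) ->
  exists zs : seq Y, forall y, exists2 z, z \in zs & D z y.
Proof.
move=> cY D nD; apply: contrapT => hno.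
have ne : forall zs : seq Y, exists y, forall z, z \in zs -> ~ D z y.
  move=> zs; apply: contrapT => h1; apply: hno; exists zs => y.
  apply: contrapT => h2; apply: h1; exists y => z zin Dzy; apply: h2; by exists z.
pose F := filter_from [set: seq Y] (fun zs => [set y | forall z, z \in zs -> ~ D z y]).
have FF : Filter F.
  apply: filter_from_filter; first by exists [::].
  move=> a b _ _; exists (a ++ b) => // y h; split => z zin; apply: h; rewrite mem_cat zin ?orbT //.
have PF : ProperFilter F by apply: filter_from_proper => zs _; have [y hy] := ne zs; exists y.
have FT : F [set: Y] by exists [::].
have [p [_ clp]] := cY F PF FT.
have Fp : F [set y | forall z, z \in [:: p] -> ~ D z y] by exists [:: p].
have [w [hw Dw]] := clp _ _ Fp (nD p).
by apply: (hw p); rewrite ?mem_seq1.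
Qed.

Section Approx.
Variables (R : realType) (Y : topologicalType) (mu : (Y -> R) -> R).
Hypothesis smu : is_state mu.
Variables (n : nat) (Fs : 'I_n -> Y -> R) (eps : R) (D : Y -> set Y).
Hypothesis cFs : forall i, continuous (Fs i).
Hypothesis eps0 : 0 <= eps.
Hypothesis clD : forall z, clopen (D z).
Hypothesis oscD : forall z z1 z2, D z z1 -> D z z2 -> forall i, `|Fs i z1 - Fs i z2| <= eps.

Lemma piece_bound (T : set Y) (y0 : Y) (z : Y) : clopen T -> T `<=` D z -> (T !=set0 -> T y0) ->
  forall i, `|mu (fun x => Fs i x * chi R T x) - mu (chi R T) * Fs i y0| <= eps * mu (chi R T).
Proof.
move=> clT TD hy0 i.
have cT := chi_cont R _ _ clT.
have e1 : mu (fun x => Fs i x * chi R T x) - mu (chi R T) * Fs i y0 =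
    mu (fun x => (Fs i x - Fs i y0) * chi R T x).
  have -> : (fun x => (Fs i x - Fs i y0) * chi R T x) =
      (fun x => Fs i x * chi R T x - Fs i y0 * chi R T x).
    by apply: funext => x; rewrite mulrBl.
  rewrite st_sub //; first by rewrite st_scale // mulrC.
  - exact: ct_mul.
  - exact: ct_scale.
rewrite e1 -st_scale //; apply: st_abs_le => //.
- by apply: ct_mul => //; apply: ct_sub => //; apply: ct_cst.
- exact: ct_scale.
move=> x; have [Tx|nTx] := pselect (T x).
  rewrite !chi_in // !mulr1; apply: oscD; [exact: TD | apply: TD; apply: hy0; by exists x].
by rewrite !chi_out // !mulr0 normr0.
Qed.

Lemma ind_step (zs : seq Y) : forall S : set Y, clopen S ->
  S `<=` [set y | exists2 z, z \in zs & D z y] ->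
  exists l : seq (R * Y), [/\ (forall p, p \in l -> 0 <= p.1),
    \sum_(p <- l) p.1 = mu (chi R S) &
    forall i, `|mu (fun x => Fs i x * chi R S x) - \sum_(p <- l) p.1 * Fs i p.2| <= eps * mu (chi R S)].
Proof.
elim: zs => [|z zs IH] S clS Scov.
  have e : chi R S = (fun _ => 0).
    by apply: funext => x; rewrite chi_out // => /Scov [].
  exists [::]; rewrite !big_nil; split => // [|i]; first by rewrite e st_cst.
  have -> : (fun x => Fs i x * chi R S x) = (fun _ => 0).
    by apply: funext => x; rewrite e mulr0.
  have -> : \sum_(p <- [::]) p.1 * Fs i p.2 = 0 :> R by rewrite big_nil.
  by rewrite e st_cst // subr0 normr0 mulr0.
pose T := S `&` D z; pose S' := S `&` ~` D z.
have clT : clopen T by apply: clopenI.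
have clS' : clopen S' by apply: clopenI => //; apply: clopenC.
have S'cov : S' `<=` [set y | exists2 z, z \in zs & D z y].
  move=> y [Sy nDy]; have [w] := Scov y Sy; rewrite in_cons => /orP[/eqP ->|wz Dw] //.
  by exists w.
have [l' [pos' sum' bd']] := IH S' clS' S'cov.
pose y0 := xget z T.
have hy0 : T !=set0 -> T y0 by move=> ne; apply: xgetPex.
have split1 : chi R S = (fun x => chi R T x + chi R S' x).
  apply: funext => x; have [Sx|nSx] := pselect (S x); last first.
    have h1 : ~ T x by case.
    have h2 : ~ S' x by case.
    by rewrite (chi_out R nSx) (chi_out R h1) (chi_out R h2) addr0.
  have [Dx|nDx] := pselect (D z x).
    have h1 : T x by [].
    have h2 : ~ S' x by case.
    by rewrite (chi_in R Sx) (chi_in R h1) (chi_out R h2) addr0.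
  have h1 : ~ T x by case.
  have h2 : S' x by [].
  by rewrite (chi_in R Sx) (chi_out R h1) (chi_in R h2) add0r.
have cT := chi_cont R _ _ clT; have cS' := chi_cont R _ _ clS'.
exists ((mu (chi R T), y0) :: l'); split.
- move=> p; rewrite in_cons => /orP[/eqP -> /=|/pos' //].
  by apply: st_pos => // x; apply: chi_ge0.
- by rewrite big_cons sum' split1 st_add.
move=> i; rewrite big_cons /=.
have e2 : mu (fun x => Fs i x * chi R S x) =
    mu (fun x => Fs i x * chi R T x) + mu (fun x => Fs i x * chi R S' x).
  rewrite -st_add //; try by apply: ct_mul.
  by congr mu; apply: funext => x; rewrite split1 mulrDr.
rewrite e2 split1 st_add // mulrDr.
have -> : mu (fun x => Fs i x * chi R T x) + mu (fun x => Fs i x * chi R S' x) -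
   (mu (chi R T) * Fs i y0 + \sum_(j <- l') j.1 * Fs i j.2) =
   (mu (fun x => Fs i x * chi R T x) - mu (chi R T) * Fs i y0) +
   (mu (fun x => Fs i x * chi R S' x) - \sum_(j <- l') j.1 * Fs i j.2).
  by rewrite opprD addrACA.
apply: (le_trans (ler_normD _ _)); apply: lerD; last exact: bd'.
by apply: (piece_bound _ _ z) => // x [_].
Qed.
End Approx.
Section Avg.
Variables (R : realType) (G : topologicalType)
    (mul : G -> G -> G) (inv : G -> G) (one : G) (K : set G)
    (haar : (G -> R) -> R) (X : topologicalType) (act : G -> X -> X).
Hypothesis hG : topgroup mul inv one.
Hypothesis hK : compact_open_subgroup mul inv one K.
Hypothesis hH : normalized_haar mul K haar.
Hypothesis hA : continuous_action mul one act.

Lemma inv_inv g : inv (inv g) = g.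
Proof.
case: hG => mA m1 mg1 mV mgV _ _ _.
by rewrite -[inv (inv g)]mg1 -(mV g) mA mV m1.
Qed.

Lemma inv_mul a b : inv (mul a b) = mul (inv b) (inv a).
Proof.
case: hG => mA m1 mg1 mV mgV _ _ _.
have canc c x y : mul c x = mul c y -> x = y.
  by move=> e; rewrite -(m1 x) -(mV c) -mA e mA mV m1.
apply: (canc (mul a b)); rewrite mgV.
by rewrite -mA (mA b) mgV m1 mgV.
Qed.

Lemma act_mul g h x : act (mul g h) x = act g (act h x).
Proof. by case: hA. Qed.

Lemma act_cont2 : continuous (fun p : G * X => act p.1 p.2).
Proof. by case: hA. Qed.

Lemma act_cont g : continuous (act g).
Proof.
move=> x; apply: (@continuous2_cvg _ G X X (nbhs x) _ (fun _ => g) id act g x).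
- exact: (act_cont2 (g, x)).
- exact: cvg_cst.
- exact: cvg_id.
Qed.

Lemma inv_cont : continuous inv.
Proof. by case: hG. Qed.

Lemma actinv_cont (f : X -> R) x : continuous f -> continuous (fun k => f (act (inv k) x)).
Proof.
move=> hf k; apply: (continuous_comp _ (hf _)).
apply: (@continuous2_cvg _ G X X (nbhs k) _ inv (fun _ => x) act (inv k) x).
- exact: (act_cont2 (inv k, x)).
- exact: inv_cont.
- exact: cvg_cst.
Qed.

Lemma hr_ext f g : (forall k, K k -> f k = g k) -> haar f = haar g.
Proof. by case: hH => h _ => e; apply: h => k /set_mem; apply: e. Qed.

Lemma hr_add (f g : G -> R) : continuous f -> continuous g ->
  haar (fun k => f k + g k) = haar f + haar g.
Proof.
case: hH => _ [h _ _ _ _] cf cg; apply: h; exact: continuous_subspaceT.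
Qed.
Lemma hr_scale c (f : G -> R) : continuous f -> haar (fun k => c * f k) = c * haar f.
Proof. case: hH => _ [_ h _ _ _] cf; apply: h; exact: continuous_subspaceT. Qed.
Lemma hr_pos (f : G -> R) : continuous f -> (forall k, K k -> 0 <= f k) -> 0 <= haar f.
Proof. case: hH => _ [_ _ h _ _] cf; apply: h; exact: continuous_subspaceT. Qed.
Lemma hr_one : haar (fun _ => 1) = 1.
Proof. by case: hH => _ []. Qed.
Lemma hr_inv (f : G -> R) k0 : K k0 -> continuous f -> haar (fun k => f (mul k0 k)) = haar f.
Proof. case: hH => _ [_ _ _ _ h] Kk cf; apply: h => //; exact: continuous_subspaceT. Qed.

Lemma hr_cst c : haar (fun _ => c) = c.
Proof.
have -> : (fun _ : G => c) = (fun x => c * (fun _ => 1) x) by apply: funext => x; rewrite mulr1.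
by rewrite hr_scale ?hr_one ?mulr1 //; apply: ct_cst.
Qed.
Lemma hr_opp (f : G -> R) : continuous f -> haar (fun x => - f x) = - haar f.
Proof.
move=> hf; have -> : (fun x => - f x) = (fun x => -1 * f x) by apply: funext => x; rewrite mulN1r.
by rewrite hr_scale // mulN1r.
Qed.
Lemma hr_sub (f g : G -> R) : continuous f -> continuous g -> haar (fun x => f x - g x) = haar f - haar g.
Proof. by move=> hf hg; rewrite hr_add ?hr_opp //; apply: ct_opp. Qed.
Lemma hr_le (f g : G -> R) : continuous f -> continuous g -> (forall x, K x -> f x <= g x) -> haar f <= haar g.
Proof.
move=> hf hg h; rewrite -subr_ge0 -hr_sub //; apply: hr_pos; first exact: ct_sub.
by move=> x Kx; rewrite subr_ge0; apply: h.
Qed.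
Lemma hr_abs_le (h : G -> R) c : continuous h -> (forall x, K x -> `|h x| <= c) -> `|haar h| <= c.
Proof.
move=> hh hle; rewrite ler_norml; apply/andP; split.
  rewrite -[c in - c]hr_cst -hr_opp; last exact: ct_cst.
  apply: hr_le => //; first by apply: ct_opp; apply: ct_cst.
  by move=> x Kx; have := hle x Kx; rewrite ler_norml => /andP[].
rewrite -[c in _ <= c]hr_cst; apply: hr_le => //; first exact: ct_cst.
by move=> x Kx; have := hle x Kx; rewrite ler_norml => /andP[].
Qed.

Implicit Types f g : X -> R.
Definition Av (f : X -> R) (x : X) : R := haar (fun k => f (act (inv k) x)).

Lemma Av_add f g : continuous f -> continuous g -> forall x, Av (fun z => f z + g z) x = Av f x + Av g x.
Proof. by move=> cf cg x; rewrite /Av hr_add //; apply: actinv_cont. Qed.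
Lemma Av_scale (c : R) f : continuous f -> forall x, Av (fun z => c * f z) x = c * Av f x.
Proof. by move=> cf x; rewrite /Av hr_scale //; apply: actinv_cont. Qed.
Lemma Av_pos f : continuous f -> (forall z, 0 <= f z) -> forall x, 0 <= Av f x.
Proof. by move=> cf fp x; apply: hr_pos => //; apply: actinv_cont. Qed.
Lemma Av_one x : Av (fun _ => 1) x = 1.
Proof. exact: hr_one. Qed.

Lemma Av_inv f k0 x : continuous f -> K k0 -> Av f (act k0 x) = Av f x.
Proof.
move=> cf Kk0; rewrite /Av.
have Kik0 : K (inv k0) by case: hK => _ _ h _ _; apply: h.
have e := hr_inv (fun k => f (act (inv k) x)) (inv k0) Kik0 (actinv_cont _ x cf).
rewrite -e; congr haar; apply: funext => k.
by rewrite inv_mul inv_inv act_mul.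
Qed.

Lemma Phi_cont (f : X -> R) : continuous f -> continuous (fun p : G * X => f (act (inv p.1) p.2)).
Proof.
move=> cf p; apply: (continuous_comp _ (cf _)).
apply: (@continuous2_cvg _ G X X (nbhs p) _ (fun p => inv p.1) snd act (inv p.1) p.2).
- have := act_cont2 (inv p.1, p.2); rewrite /continuous_at /=; exact.
- apply: (cvg_comp _ _ cvg_fst); exact: (inv_cont).
- exact: cvg_snd.
Qed.

Lemma Av_cont (f : X -> R) : continuous f -> continuous (Av f).
Proof.
move=> cf x0; apply/cvgrPdist_le => e e0.
have e20 : 0 < e / 2 by rewrite divr_gt0.
have cK : compact K by case: hK.
have nc := (compact_near_coveringP K).1 cK.
have key : \forall x \near x0, K `<=` (fun k => `|f (act (inv k) x0) - f (act (inv k) x)| < e).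
  apply: nc => k Kk.
have := Phi_cont _ cf (k, x0); move/cvgrPdist_lt => /(_ _ e20).
case=> [[A B]] /= [nA nB] sub.
exists (A, B) => //= -[k' x] /= [Ak' Bx].
have h1 := sub (k', x0) (conj Ak' (nbhs_singleton nB)).
have h2 := sub (k', x) (conj Ak' Bx).
rewrite /= in h1 h2.
have -> : f (act (inv k') x0) - f (act (inv k') x) =
  (f (act (inv k) x0) - f (act (inv k') x)) - (f (act (inv k) x0) - f (act (inv k') x0)).
  by rewrite opprB [in RHS]addrC addrA subrK.
rewrite (splitr e); apply: (le_lt_trans (ler_normB _ _)).
by rewrite addrC ltrD.
move: key; apply: filterS => x sub; rewrite /Av -hr_sub //; try exact: actinv_cont.
apply: hr_abs_le => //; first by apply: ct_sub; apply: actinv_cont.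
by move=> k Kk; apply/ltW/sub.
Qed.

Variables (Y : topologicalType) (q : X -> Y).
Hypothesis hX : compact [set: X].
Hypothesis hY : compact_hausdorff Y.
Hypothesis hq : continuous q.
Hypothesis qsurj : forall y : Y, exists x : X, q x = y.
Hypothesis qfib : forall x x', q x = q x' <-> exists2 k, K k & x' = act k x.

Lemma quot_cont (H : Y -> R) : continuous (fun x => H (q x)) -> continuous H.
Proof.
move=> cHq; apply/continuous_closedP => C cC.
have -> : H @^-1` C = q @` ((fun x => H (q x)) @^-1` C).
  apply/seteqP; split => [y Cy|_ [x Cx <-] //].
  by have [x qx] := qsurj y; exists x => //=; rewrite qx.
apply: (compact_closed hY.2); apply: continuous_compact.
  exact: continuous_subspaceT.
apply: (subclosed_compact _ hX) => //.
by apply: preimage_closed => // x _; apply: cHq.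
Qed.

Let s (y : Y) : X := projT1 (cid (qsurj y)).
Lemma qs y : q (s y) = y.
Proof. exact: (projT2 (cid (qsurj y))). Qed.

Definition desc (f : X -> R) (y : Y) : R := Av f (s y).

Lemma desc_q f x : continuous f -> desc f (q x) = Av f x.
Proof.
move=> cf; have : q (s (q x)) = q x by rewrite qs.
by case/qfib => k Kk e; rewrite /desc [in RHS]e Av_inv.
Qed.

Lemma desc_cont f : continuous f -> continuous (desc f).
Proof.
move=> cf; apply: quot_cont.
have -> : (fun x => desc f (q x)) = Av f by apply: funext => x; rewrite desc_q.
exact: Av_cont.
Qed.

Lemma hyp_act_desc (g : G) (F : Y -> R) (y : Y) : continuous F ->
  hyp_act inv act q haar g F y = desc (fun z => F (q (act (inv g) z))) y.
Proof.
move=> cF; have cf : continuous (fun z => F (q (act (inv g) z))).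
  by move=> z; apply: continuous_comp; [apply: continuous_comp; [apply: act_cont|apply: hq]|apply: cF].
rewrite /hyp_act; apply: xget_unique.
  by exists (s y); split; [exact: qs|].
move=> r [x [qx ->]]; rewrite -qx desc_q //.
Qed.

Hypothesis hmin : forall x : X, closure (range (fun h : G => act h x)) = [set: X].
Hypothesis hsp : forall mu : (X -> R) -> R, is_state mu ->
  exists x : X, wstar_closure (G_orbit_state act mu) (@dirac_state R X x).

Lemma desc_add f g : continuous f -> continuous g ->
  desc (fun x => f x + g x) = (fun y => desc f y + desc g y).
Proof. by move=> cf cg; apply: funext => y; rewrite /desc Av_add. Qed.
Lemma desc_scale (c : R) f : continuous f ->
  desc (fun x => c * f x) = (fun y => c * desc f y).
Proof. by move=> cf; apply: funext => y; rewrite /desc Av_scale. Qed.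

Lemma lift_state (mu : (Y -> R) -> R) : is_state mu -> is_state (fun f : X -> R => mu (desc f)).
Proof.
move=> smu; split.
- move=> f g cf cg /=; rewrite (desc_add f g cf cg) st_add //; exact: desc_cont.
- move=> c f cf /=; rewrite (desc_scale c f cf) st_scale //; exact: desc_cont.
- move=> f cf fp /=; apply: st_pos => //; first exact: desc_cont.
  by move=> y; apply: Av_pos.
- have -> : desc (fun _ => 1) = (fun _ => 1) by apply: funext => y; rewrite /desc Av_one.
  exact: st_one.
Qed.

Lemma comp_q_cont (F : Y -> R) : continuous F -> continuous (fun z => F (q z)).
Proof. by move=> cF z; apply: continuous_comp; [apply: hq|apply: cF]. Qed.

Lemma SP_Y (mu : (Y -> R) -> R) : is_state mu ->
  exists y, wstar_closure (hyp_orbit_state inv act q haar mu) (@dirac_state R Y y).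
Proof.
move=> smu; have [x hx] := hsp _ (lift_state mu smu).
exists (q x) => n Fs eps cFs eps0.
have cfs : forall i, continuous (fun z => Fs i (q z)) by move=> i; apply: comp_q_cont.
have [psi [g ->] hb] := hx n (fun i z => Fs i (q z)) eps cfs eps0.
exists (fun F => mu (hyp_act inv act q haar (inv g) F)); first by exists (inv g).
move=> i; have := hb i; rewrite /dirac_state /=.
suff -> : hyp_act inv act q haar (inv g) (Fs i) = desc (fun x => Fs i (q (act g x))) by [].
by apply: funext => y; rewrite hyp_act_desc // inv_inv.
Qed.

Lemma Av_state x : is_state (fun f : X -> R => Av f x).
Proof.
split.
- by move=> f g cf cg; rewrite Av_add.
- by move=> c f cf; rewrite Av_scale.
- by move=> f cf fp; apply: Av_pos.
- exact: Av_one.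
Qed.

Lemma point_approx (y y' : Y) n (Fs : 'I_n -> Y -> R) (eps : R) :
  (forall i, continuous (Fs i)) -> 0 < eps ->
  exists g : G, forall i, `|hyp_act inv act q haar g (Fs i) y - Fs i y'| < eps.
Proof.
move=> cFs e0; have e20 : 0 < eps / 2 by rewrite divr_gt0.
have [x0 hx0] := hsp _ (Av_state (s y)).
have nN : \forall z \near s y', forall i, `|Fs i y' - Fs i (q z)| < eps / 2.
  apply: filter_forall => i.
  have := comp_q_cont _ (cFs i) (s y'); move/cvgrPdist_lt => /(_ _ e20).
  by rewrite qs.
have : closure (range (fun h : G => act h x0)) (s y') by rewrite hmin.
move=> /(_ _ nN) [_ [[h _ <-] Nh]].
have cfs : forall i, continuous (fun z => Fs i (q (act h z))).
  by move=> i z; exact: (continuous_comp (act_cont h z) (comp_q_cont _ (cFs i) _)).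
have [psi [g ->] hb] := hx0 n (fun i z => Fs i (q (act h z))) (eps / 2) cfs e20.
exists (inv (mul h g)) => i.
rewrite hyp_act_desc // inv_inv.
have -> : desc (fun z => Fs i (q (act (mul h g) z))) y = Av (fun z => Fs i (q (act h (act g z)))) (s y).
  by rewrite /desc; congr Av; apply: funext => z; rewrite act_mul.
have h1 := hb i; have h2 := Nh i; rewrite /dirac_state /= in h1 h2.
rewrite (splitr eps).
have -> : Av (fun z => Fs i (q (act h (act g z)))) (s y) - Fs i y' =
  (Fs i (q (act h x0)) - Fs i y') - (Fs i (q (act h x0)) - Av (fun z => Fs i (q (act h (act g z)))) (s y)).
  by rewrite opprB [in RHS]addrC addrA subrK.
apply: (le_lt_trans (ler_normB _ _)).
by rewrite distrC ltrD.
Qed.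

Hypothesis tdY : totally_disconnected [set: Y].

Lemma MIN_Y (y : Y) (mu : (Y -> R) -> R) : is_state mu ->
  wstar_closure (state_conv (hyp_orbit_state inv act q haar (@dirac_state R Y y))) mu.
Proof.
move=> smu n Fs eps cFs e0.
have e40 : 0 < eps / 4 by rewrite divr_gt0.
have e20 : 0 <= eps / 2 by rewrite ltW // divr_gt0.
have nU : forall z : Y, nbhs z [set z' | forall i, `|Fs i z - Fs i z'| < eps / 4].
  move=> z; apply: filter_forall => i.
  by have := cFs i z; move/cvgrPdist_lt => /(_ _ e40).
have hD : forall z, exists Dz : set Y,
    [/\ clopen Dz, Dz z & Dz `<=` [set z' | forall i, `|Fs i z - Fs i z'| < eps / 4]].
  by move=> z; exact: (@clopen_nbhs R Y hY.1 hY.2 tdY z _ (nU z)).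
have [D hDp] := choice hD.
have clD z : clopen (D z) by case: (hDp z).
have Dz z : D z z by case: (hDp z).
have oscD : forall z z1 z2, D z z1 -> D z z2 -> forall i, `|Fs i z1 - Fs i z2| <= eps / 2.
  move=> z z1 z2 h1 h2 i; case: (hDp z) => _ _ sub.
  have a1 := sub _ h1 i; have a2 := sub _ h2 i; rewrite /= in a1 a2.
  have -> : Fs i z1 - Fs i z2 = (Fs i z - Fs i z2) - (Fs i z - Fs i z1).
    by rewrite opprB [in RHS]addrC addrA subrK.
  apply/ltW; apply: (le_lt_trans (ler_normB _ _)).
  by rewrite -quarter ltrD.
have nbD z : nbhs z (D z) by apply: open_nbhs_nbhs; split; [case: (clD z)|exact: Dz].
have [zs hzs] := @fin_cover Y hY.1 D nbD.
have cov : [set: Y] `<=` [set y | exists2 z, z \in zs & D z y] by move=> w _; exact: hzs.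
have [l [pos sumw bd]] := @ind_step R Y mu smu n Fs (eps / 2) D cFs clD oscD zs [set: Y] clopenT cov.
have chiT : chi R [set: Y] = (fun _ => 1) by apply: funext => x; rewrite (chi_in R (S:=[set: Y])).
rewrite chiT (st_one smu) in sumw.
pose d := ((0 : R), y).
pose m := size l.
have hg : forall j : 'I_m, exists g : G, forall i,
    `|hyp_act inv act q haar g (Fs i) y - Fs i (nth d l j).2| < eps / 4.
  by move=> j; apply: point_approx.
have [gs hgs] := choice hg.
exists (fun F => \sum_(j < m) (nth d l j).1 * hyp_act inv act q haar (gs j) F y).
  exists m, (fun j => (nth d l j).1),
    (fun j => fun F => dirac_state y (hyp_act inv act q haar (gs j) F)); split => //.
  - by move=> j; apply: pos; apply: mem_nth.
  - by rewrite -sumw (big_nth d) big_mkord.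
  - by move=> j; exists (gs j).
move=> i; have bdi := bd i.
have e3 : (fun x => Fs i x * chi R [set: Y] x) = Fs i by apply: funext => x; rewrite chiT mulr1.
rewrite e3 chiT (st_one smu) mulr1 in bdi.
move: bdi; rewrite (big_nth d) big_mkord => bdi.
rewrite /= -/m in bdi *.
have -> : mu (Fs i) - \sum_(j < m) (nth d l j).1 * hyp_act inv act q haar (gs j) (Fs i) y =
  (mu (Fs i) - \sum_(j < m) (nth d l j).1 * Fs i (nth d l j).2) +
  \sum_(j < m) (nth d l j).1 * (Fs i (nth d l j).2 - hyp_act inv act q haar (gs j) (Fs i) y).
  rewrite -addrA; congr (_ + _).
  rewrite -!sumrN -big_split /=; apply: eq_bigr => j _.
  by rewrite mulrBr addrA addNr add0r.
apply: (le_lt_trans (ler_normD _ _)).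
have h2 : `|\sum_(j < m) (nth d l j).1 * (Fs i (nth d l j).2 - hyp_act inv act q haar (gs j) (Fs i) y)|
    <= eps / 4.
  apply: (le_trans (ler_norm_sum _ _ _)).
  apply: (@le_trans _ _ (\sum_(j < m) (nth d l j).1 * (eps / 4))).
    apply: ler_sum => j _; rewrite normrM.
    have wj : 0 <= (nth d l j).1 by apply: pos; apply: mem_nth.
    rewrite ger0_norm //; apply: ler_wpM2l => //.
    by rewrite distrC; apply/ltW/hgs.
  have sw : \sum_(j < m) (nth d l j).1 = 1 by rewrite -sumw (big_nth d) big_mkord.
  by rewrite -mulr_suml sw mul1r.
apply: (le_lt_trans (lerD bdi h2)).
rewrite [X in _ < X](splitr eps) ltrD2l -quarter.
by rewrite ltrDl.
Qed.
End Avg.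

Theorem proposition4p7 (R : realType) (G : topologicalType)
    (mul : G -> G -> G) (inv : G -> G) (one : G) (K : set G)
    (haar : (G -> R) -> R)
    (X : topologicalType) (act : G -> X -> X)
    (Y : topologicalType) (q : X -> Y) :
  tdlc_group mul inv one ->
  compact_open_subgroup mul inv one K ->
  normalized_haar mul K haar ->
  G_boundary R mul one act ->
  (* Y together with q is the orbit space K\X *)
  compact_hausdorff Y -> continuous q -> (forall y : Y, exists x : X, q x = y) ->
  (forall x x', q x = q x' <-> exists2 k, K k & x' = act k x) ->
  totally_disconnected [set: Y] ->
  hyp_boundary inv act q haar.
Proof.
move=> [hG _ _] hK hH [[hX _] hA hmin hsp] hY hq qsurj qfib tdY.
split.
- move=> y mu smu; exact: (@MIN_Y R G mul inv one K haar X act hG hK hH hA Y q hY hq qsurj qfib hmin hsp tdY y mu smu).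
- move=> mu smu; exact: (@SP_Y R G mul inv one K haar X act hG hK hH hA Y q hX hY hq qsurj qfib hsp mu smu).
Qed.
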